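(* Let $\mathcal{X}$ be a finite set with $|\mathcal{X}|=n$, and let $s,t\ge 0$ be integers with $s+t\le n$. Generate random subsets $\mathcal{T},\mathcal{S}\subseteq\mathcal{X}$ as follows: (0) draw $\mathcal{L}\subseteq\mathcal{X}$ of size $t+s$ uniformly at random without replacement; (1) draw $\mathcal{T}\subseteq\mathcal{L}$ of size $t$ uniformly at random without replacement from $\mathcal{L}$; (2) draw an integer $i$ from the hypergeometric distribution with population size $n$, $t$ success states and $s$ draws, i.e. $\Pr\{i\}=\binom{t}{i}\binom{n-t}{s-i}/\binom{n}{s}$; (3) draw $i$ elements uniformly at random without replacement from $\mathcal{T}$; (4) draw $s-i$ elements uniformly at random without replacement from $\mathcal{L}\setminus\mathcal{T}$; (5) let $\mathcal{S}$ be the union of the elements drawn in steps (3) and (4). Then $\Pr\{\mathcal{T}=T\}=1/\binom{n}{t}$ for every $t$-subset $T\subseteq\mathcal{X}$, and $\Pr\{\mathcal{S}=S\mid\mathcal{T}=T\}=1/\binom{n}{s}$ for every $s$-subset $S$ and $t$-subset $T$ of $\mathcal{X}$; that is, $(\mathcal{T},\mathcal{S})$ has the same joint distribution as a pair of independent samples of sizes $t$ and $s$, each drawn uniformly at random without replacement from $\mathcal{X}$. *)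

(* Defs.v *)
From HB Require Import structures.
From mathcomp Require Import all_boot all_order all_algebra.
Set Implicit Arguments. Unset Strict Implicit. Unset Printing Implicit Defensive.
Import Order.TTheory GRing.Theory Num.Theory.
Local Open Scope ring_scope.

Definition unif_draw (X : finType) (A : {set X}) (k : nat) (B : {set X}) : rat :=
  if (B \subset A) && (#|B| == k) then ('C(#|A|, k)%:R)^-1 else 0.

Definition hypergeom (n t s i : nat) : rat :=
  ('C(t, i) * 'C(n - t, s - i))%:R / ('C(n, s))%:R.

(* Joint probability Pr{ T = T0, S = S0 } for the procedure (0)-(5). *)
Definition jointP (X : finType) (t s : nat) (T0 S0 : {set X}) : rat :=
  \sum_(L : {set X})
    unif_draw [set: X] (t + s) L * unif_draw L t T0 *
    \sum_(i < s.+1) hypergeom #|X| t s i *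
      \sum_(A : {set X}) \sum_(B : {set X})
        unif_draw T0 i A * unif_draw (L :\: T0) (s - i) B *
        (if S0 == A :|: B then 1 else 0).

Definition margT (X : finType) (t s : nat) (T0 : {set X}) : rat :=
  \sum_(S0 : {set X}) jointP t s T0 S0.

(* Main.v *)
Require Import Defs.
From mathcomp Require Import all_boot all_order all_algebra.
From mathcomp Require Import ring zify.
Import Order.TTheory GRing.Theory Num.Theory.
Local Open Scope ring_scope.

Lemma bin_mul a b c : (b + c <= a)%N -> ('C(a, b+c) * 'C(b+c, b) = 'C(a, b) * 'C(a-b, c))%N.
Proof.
move=> h.
have hb : (b <= a)%N by apply: leq_trans h; apply: leq_addr.
have hc : (c <= a - b)%N by rewrite leq_subRL // addnC.
have F1 := bin_fact h. have F2 := bin_fact (leq_addr c b).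
have F3 := bin_fact hb. have F4 := bin_fact hc.
rewrite addKn in F2. rewrite subnDA in F1.
apply/eqP; rewrite -(eqn_pmul2r (_ : 0 < b`! * (c`! * (a - b - c)`!))%N);
  last by rewrite !muln_gt0 !fact_gt0.
apply/eqP; transitivity a`!.
  by rewrite -F1 -F2; ring.
by rewrite -F3 -F4; ring.
Qed.

Section S.
Variable X : finType.

Lemma pick1 (F : {set X} -> rat) a : \sum_A F A * (A == a)%:R = F a.
Proof.
rewrite (bigD1 a) //= eqxx mulr1 big1 ?addr0 // => A /negbTE ->; by rewrite mulr0.
Qed.

Lemma sum_ind (P : pred {set X}) : \sum_L (P L)%:R = (#|[set L | P L]|)%:R :> rat.
Proof.
rewrite (eq_bigr (fun L => if P L then 1 else 0)); last by move=> L _; case: (P L).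
by rewrite -big_mkcond /= -sum1dep_card natr_sum.
Qed.

Lemma inner (T0 L S0 : {set X}) i j :
  \sum_(A : {set X}) \sum_(B : {set X})
        unif_draw T0 i A * unif_draw (L :\: T0) j B *
        (if S0 == A :|: B then 1 else 0)
  = unif_draw T0 i (S0 :&: T0) * unif_draw (L :\: T0) j (S0 :\: T0).
Proof.
transitivity (\sum_(A : {set X}) \sum_(B : {set X})
   (unif_draw T0 i A * (A == S0 :&: T0)%:R) *
   (unif_draw (L :\: T0) j B * (B == S0 :\: T0)%:R)).
  apply: eq_bigr => A _; apply: eq_bigr => B _.
  rewrite /unif_draw; case: ifP => [/andP[hA _]|_]; last by rewrite !mul0r.
  case: ifP => [/andP[hB _]|_]; last by rewrite !(mulr0, mul0r).
  suff -> : (S0 == A :|: B) = (A == S0 :&: T0) && (B == S0 :\: T0).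
    by case: (A == S0 :&: T0); case: (B == S0 :\: T0); rewrite /= ?mulr1 ?mulr0 ?mul0r.
  apply/eqP/andP => [->|[/eqP -> /eqP ->]]; last by rewrite setID.
  have H : forall x, ((x \in A) ==> (x \in T0)) && ((x \in B) ==> (x \in L :\: T0)).
    by move=> x; apply/andP; split; apply/implyP/subsetP.
  split; apply/eqP/setP => x; move: (H x); rewrite !inE;
  by case: (x \in A); case: (x \in B); case: (x \in T0); case: (x \in L).
rewrite (eq_bigr (fun A => unif_draw T0 i A * (A == S0 :&: T0)%:R *
   unif_draw (L :\: T0) j (S0 :\: T0))); last first.
  by move=> A _; rewrite -big_distrr /= pick1.
by rewrite -big_distrl /= pick1.
Qed.

Lemma zero_term (T0 M S0 : {set X}) s (i : nat) : (i <= s)%N -> #|S0| != s ->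
  unif_draw T0 i (S0 :&: T0) * unif_draw M (s - i) (S0 :\: T0) = 0.
Proof.
move=> his hS; rewrite /unif_draw; case: ifP => [/andP[_ /eqP e1]|_]; last by rewrite mul0r.
case: ifP => [/andP[_ /eqP e2]|_]; last by rewrite mulr0.
exfalso; move/eqP: hS; apply; rewrite -(cardsID T0 S0) e1 e2; lia.
Qed.

Lemma count_super (B : {set X}) a : (#|B| <= a)%N -> (a <= #|X|)%N ->
  #|[set L : {set X} | (B \subset L) && (#|L| == a)]| = 'C(#|X| - #|B|, a - #|B|).
Proof.
move=> h1 h2.
rewrite -(card_imset _ (@setC_inj X)).
have cC : forall L : {set X}, #|~: L| = (#|X| - #|L|)%N.
  by move=> L; rewrite -(cardsC L) addKn.
have -> : (@setC X) @: [set L : {set X} | (B \subset L) && (#|L| == a)] =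
          [set A : {set X} | A \subset ~: B & #|A| == (#|X| - a)%N].
  apply/setP=> A; rewrite !inE; apply/imsetP/idP => [[L]|H].
    rewrite inE => /andP[hB /eqP hL] ->; by rewrite setCS hB cC hL eqxx.
  exists (~: A); last by rewrite setCK.
  move/andP: H => [hA /eqP hc].
  by rewrite inE -setCS setCK hA cC hc /= subKn.
rewrite cards_draws.
rewrite cC -bin_sub; last lia.
congr 'C(_, _); lia.
Qed.

End S.

Lemma jointP_val (X : finType) (n s t : nat) (hn : #|X| = n)
  (hst : (s + t <= n)%N) (T0 S0 : {set X}) : #|T0| = t ->
  jointP t s T0 S0 = (#|S0| == s)%:R / ('C(n, t)%:R * 'C(n, s)%:R).
Proof.
move=> hT.
case: (boolP (#|S0| == s)) => hS; last first.
  rewrite mul0r /jointP big1 // => L _.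
  rewrite big1 ?mulr0 // => i _.
  by rewrite inner zero_term ?mulr0 // -ltnS ltn_ord.
set k := #|S0 :&: T0|. set m := #|S0 :\: T0|.
have km : (k + m)%N = s by rewrite /k /m cardsID (eqP hS).
have hk : (k < s.+1)%N by rewrite ltnS -km leq_addr.
have kt : (k <= t)%N by rewrite -hT subset_leq_card // subsetIr.
set K := ('C(n, t + s)%:R)^-1 * ('C(t + s, t)%:R)^-1 *
   (hypergeom n t s k * ('C(t, k)%:R)^-1 * ('C(s, m)%:R)^-1) : rat.
rewrite /jointP.
transitivity (\sum_(L : {set X}) ([&& T0 :|: S0 \subset L & #|L| == (t + s)%N])%:R * K).
  apply: eq_bigr => L _.
  rewrite (eq_bigr (fun i : 'I_s.+1 => hypergeom #|X| t s i *
     (unif_draw T0 i (S0 :&: T0) * unif_draw (L :\: T0) (s - i) (S0 :\: T0))));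
    last by move=> i _; rewrite inner.
  rewrite (bigD1 (Ordinal hk)) //= big1 ?addr0; last first.
    move=> i hi.
    have e : (k == i) = false.
      apply/negbTE; apply: contra hi => /eqP e; apply/eqP/val_inj; by rewrite /= -e.
    by rewrite {1}/unif_draw -/k e andbF mul0r mulr0.
  have -> : (s - k)%N = m by rewrite -km addKn.
  rewrite {1}/unif_draw subsetT /=.
  case hL: (#|L| == (t + s)%N); last by rewrite !mul0r andbF mul0r.
  rewrite {1 2}/unif_draw hT eqxx andbT (eqP hL) cardsT hn subsetIr eqxx /=.
  case hTL: (T0 \subset L); last first.
    by rewrite subUset hTL /= !(mulr0, mul0r).
  have cM : #|L :\: T0| = s.
    by rewrite cardsD (setIidPr hTL) (eqP hL) hT addKn.
  have e : (S0 :\: T0 \subset L :\: T0) = (T0 :|: S0 \subset L).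
    apply/idP/idP => H; apply/subsetP => x.
      have := subsetP H x; have := subsetP hTL x; rewrite !inE.
      by case: (x \in T0); case: (x \in S0); case: (x \in L) => //= _ ->.
    have := subsetP H x; have := subsetP hTL x; rewrite !inE.
    by case: (x \in T0); case: (x \in S0); case: (x \in L) => //= _ ->.
  rewrite /unif_draw cM e eqxx andbT.
  case: (T0 :|: S0 \subset L) => /=; rewrite /K; ring.
have ms : (m <= s)%N by rewrite -km leq_addl.
have cU : #|T0 :|: S0| = (t + m)%N.
  by rewrite cardsU hT -(cardsID T0 S0) (setIC T0 S0) -/k -/m; lia.
rewrite -big_distrl /= sum_ind count_super; first last.
- by rewrite hn; rewrite addnC.
- by rewrite cU leq_add2l.
have sk : (s - k)%N = m by rewrite -km addKn.
rewrite cU hn /K /hypergeom sk subnDA subnDl.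
have E1 := @bin_mul n t s ltac:(by rewrite addnC).
have E2 := @bin_mul (n-t) m (s-m) ltac:(rewrite subnKC //; lia).
rewrite subnKC // in E2.
have nz : forall a b, (b <= a)%N -> ('C(a, b)%:R : rat) != 0.
  by move=> a b hab; rewrite pnatr_eq0 -lt0n bin_gt0.
have E1r : ('C(n, t + s)%:R : rat) = 'C(n,t)%:R * 'C(n-t,s)%:R / 'C(t+s,t)%:R.
  rewrite -natrM -E1 natrM; field; apply: nz; exact: leq_addr.
have E2r : ('C(n - t - m, s - m)%:R : rat) = 'C(n-t,s)%:R * 'C(s,m)%:R / 'C(n-t,m)%:R.
  rewrite -natrM E2 natrM; field; apply: nz; lia.
rewrite E1r E2r; field.
by rewrite !nz //; lia.
Qed.

Theorem mainTheorem8 (X : finType) (n s t : nat) (hn : #|X| = n)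
  (hst : (s + t <= n)%N) :
  forall T0 : {set X}, #|T0| = t ->
    margT t s T0 = ('C(n, t)%:R)^-1 /\
    (forall S0 : {set X}, #|S0| = s ->
       jointP t s T0 S0 / margT t s T0 = ('C(n, s)%:R)^-1).
Proof.
move=> T0 hT.
have nz : forall a b, (b <= a)%N -> ('C(a, b)%:R : rat) != 0.
  by move=> a b hab; rewrite pnatr_eq0 -lt0n bin_gt0.
have hm : margT t s T0 = ('C(n, t)%:R)^-1.
  rewrite /margT (eq_bigr _ (fun S0 _ => @jointP_val X n s t hn hst T0 S0 hT)) -big_distrl /=.
  rewrite sum_ind card_draws hn; field.
  by rewrite !nz //; lia.
split => // S0 hS; rewrite hm (@jointP_val X n s t hn hst T0 S0 hT) hS eqxx mul1r; field.
by rewrite !nz //; lia.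
Qed.
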